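(* Let $r,n\ge2$, $\pi=A_1\cdots A_n\in\mathbb{S}_{2rn}$ with $A_j=(2r(j-1)+1\ \cdots\ 2rj)$, and $\mathcal{C}$ its conjugacy class. Let $t\in\mathcal{C}$ with $t\pi=\pi t$ and let $g\in\mathbb{S}_{2rn}$ with $g\pi g^{-1}=t$. Write $t=A_1^{d_1}\cdots A_n^{d_n}B$ and $g^{-1}\pi g=A_1^{e_1}\cdots A_n^{e_n}B'$ with $B,B'\in\langle B_1,\dots,B_{n-1}\rangle$. Then $\Phi(B)$ and $\Phi(B')$ have the same cycle type in $\mathbb{S}_n$.
   Context: Permutations are composed right to left. $B_i$ ($1\le i\le n-1$) is the involution exchanging $2r(i-1)+m\leftrightarrow 2ri+m$ for $1\le m\le 2r$. The centralizer of $\pi$ is $\mathbb{S}_{2rn}^\pi=\langle A_1,\dots,A_n\rangle\rtimes\langle B_1,\dots,B_{n-1}\rangle\cong\mathbb{Z}_{2r}^n\rtimes\mathbb{S}_n$, so every element of it is uniquely written $A_1^{d_1}\cdots A_n^{d_n}B$ with $0\le d_j\le 2r-1$ and $B\in\langle B_1,\dots,B_{n-1}\rangle$ (both $t$ and $g^{-1}\pi g$ lie in it). $\Phi:\langle B_1,\dots,B_{n-1}\rangle\to\mathbb{S}_n$ is the group isomorphism with $\Phi(B_i)=(i\ i+1)$. *)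

(* Defs.v *)
From HB Require Import structures.
From mathcomp Require Import all_boot all_order all_algebra all_fingroup.
Set Implicit Arguments. Unset Strict Implicit. Unset Printing Implicit Defensive.

(* Points of {1,...,2rn}: the point 2r*k + m + 1 (paper, 1-indexed) is
   represented by the pair (k, m) with k < n (block), m < 2r (offset).
   Permutations are MathComp perms; NB (s * t) x = t (s x) in MathComp. *)
Definition pt (r n : nat) := ('I_n * 'I_(2 * r))%type.

(* A_(j+1): the 2r-cycle on block j : (k,m) |-> (k, m+1 mod 2r) if k = j. *)
Definition Afun r n (j : 'I_n) (x : pt r n) : pt r n :=
  if x.1 == j then (x.1, ordS x.2) else x.
Definition Afun_inv r n (j : 'I_n) (x : pt r n) : pt r n :=
  if x.1 == j then (x.1, ord_pred x.2) else x.
Lemma AfunK r n j : cancel (@Afun r n j) (@Afun_inv r n j).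
Proof.
move=> [k m]; rewrite /Afun /Afun_inv /=.
case: (eqVneq k j) => [->|nkj]; first by rewrite eqxx /= ?eqxx ordSK.
by rewrite (negbTE nkj) /= ?(negbTE nkj).
Qed.
Definition Acyc r n (j : 'I_n) : {perm pt r n} := perm (can_inj (@AfunK r n j)).

Definition piperm r n : {perm pt r n} := (\prod_(j < n) Acyc r j)%g.

Definition Aprod r n (d : 'I_n -> nat) : {perm pt r n} :=
  (\prod_(j < n) (Acyc r j ^+ d j))%g.

Definition bfun r n (s : 'S_n) (x : pt r n) : pt r n := (s x.1, x.2).
Lemma bfunK r n s : cancel (@bfun r n s) (@bfun r n s^-1).
Proof. by move=> [k m]; rewrite /bfun /= permK. Qed.
Definition blockperm r n (s : 'S_n) : {perm pt r n} := perm (can_inj (@bfunK r n s)).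

(* B_i (1 <= i <= n-1): exchanges 2r(i-1)+m <-> 2ri+m, i.e. blocks i-1 and i
   (0-indexed) pointwise. *)
Definition Bgen r n (i : 'I_n) : {perm pt r n} := blockperm r (tperm (Ordinal (leq_ltn_trans (leq_pred i) (ltn_ord i))) i).

Definition Bgroup r n : {set {perm pt r n}} :=
  <<[set Bgen r i | i : 'I_n & 0 < i]>>%g.

(* Phi : <B_1..B_(n-1)> -> S_n, the isomorphism with Phi(B_i) = (i i+1);
   it is the inverse of blockperm. *)
Definition Phi r n (B : {perm pt r n}) : 'S_n :=
  odflt 1%g [pick s : 'S_n | blockperm r s == B].

(* cycle type: sorted list of the cycle lengths (fixed points included) *)
Definition cycle_type (T : finType) (s : {perm T}) : seq nat :=
  sort leq [seq #|(C : {set T})| | C <- enum (porbits s)].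

(* Main.v *)
Require Import Defs.
From mathcomp Require Import all_boot all_order all_algebra all_fingroup.
Set Implicit Arguments. Unset Strict Implicit. Unset Printing Implicit Defensive.

Lemma blockpermE r n (s : 'S_n) (x : pt r n) : blockperm r s x = (s x.1, x.2).
Proof. by rewrite /blockperm permE. Qed.

Lemma blockpermM r n (s1 s2 : 'S_n) :
  blockperm r (s1 * s2)%g = (blockperm r s1 * blockperm r s2)%g.
Proof. by apply/permP => x; rewrite permM !blockpermE permM. Qed.

Lemma blockperm1 r n : blockperm r (1 : 'S_n)%g = 1%g.
Proof. by apply/permP => x; rewrite blockpermE !perm1; case: x. Qed.

Lemma Bgroup_block r n (B : {perm pt r n}) : B \in Bgroup r n ->
  exists s, B = blockperm r s.
Proof.
move=> /gen_prodgP [k [c hc ->]].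
apply: (big_ind (fun a => exists s, a = blockperm r s)).
- by exists 1%g; rewrite blockperm1.
- by move=> _ _ [s1 ->] [s2 ->]; exists (s1 * s2)%g; rewrite blockpermM.
- move=> i _; have /imsetP [j _ ->] := hc i; rewrite /Bgen.
  by eexists.
Qed.

Lemma PhiE r n (B : {perm pt r n}) : B \in Bgroup r n -> B = blockperm r (Phi B).
Proof.
move=> /Bgroup_block [s hs]; rewrite /Phi; case: pickP => [s0 /eqP -> //|H].
by have := H s; rewrite hs eqxx.
Qed.

Lemma AcycE r n j (x : pt r n) : Acyc r j x = Afun j x.
Proof. by rewrite /Acyc permE. Qed.

Lemma prod_fst r n I (l : seq I) (F : I -> {perm pt r n}) :
  (forall i x, (F i x).1 = x.1) -> forall x, ((\prod_(i <- l) F i)%g x).1 = x.1.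
Proof.
move=> hF; elim: l => [|i l IH] x; first by rewrite big_nil perm1.
by rewrite big_cons permM IH hF.
Qed.

Lemma Acyc_fst r n j (x : pt r n) : (Acyc r j x).1 = x.1.
Proof. by rewrite AcycE /Afun; case: ifP. Qed.

Lemma AcycX_fst r n j k (x : pt r n) : ((Acyc r j ^+ k)%g x).1 = x.1.
Proof. by rewrite permX; elim: k => //= k IH; rewrite Acyc_fst. Qed.

Lemma Aprod_fst r n (d : 'I_n -> nat) (x : pt r n) : (Aprod r d x).1 = x.1.
Proof. by rewrite /Aprod; apply: prod_fst => i y; apply: AcycX_fst. Qed.

Lemma prodA_E r n (l : seq 'I_n) (x : pt r n) :
  ((\prod_(j <- l) Acyc r j)%g x) = (x.1, iter (count_mem x.1 l) (@ordS (2 * r)) x.2).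
Proof.
elim: l x => [|j l IH] [k m]; first by rewrite big_nil perm1.
rewrite big_cons permM IH AcycE /Afun /=.
by case: (eqVneq k j) => [->|nkj] /=; rewrite add0n // -iterSr iterS.
Qed.

Lemma piE r n (x : pt r n) : piperm r n x = (x.1, ordS x.2).
Proof.
by rewrite /piperm prodA_E count_uniq_mem ?index_enum_uniq ?mem_index_enum.
Qed.

Lemma iter_ordS N i (m : 'I_N) : val (iter i (@ordS N) m) = (m + i) %% N.
Proof.
elim: i => [|i IH] /=; first by rewrite addn0 modn_small.
by rewrite IH -addn1 modnDml addn1 addnS.
Qed.

Lemma reach_all N (m0 m : 'I_N) : exists i, iter i (@ordS N) m0 = m.
Proof.
exists (m + N - m0); apply/val_inj; rewrite iter_ordS subnKC.
  by rewrite modnDr modn_small.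
exact: ltnW (leq_trans (ltn_ord m0) (leq_addl _ _)).
Qed.

Lemma piX r n i (x : pt r n) : ((piperm r n ^+ i)%g x) = (x.1, iter i (@ordS (2 * r)) x.2).
Proof.
rewrite permX; elim: i => [|i IH] /=; first by case: x.
by rewrite IH piE.
Qed.

Lemma orbit_block r n (s : 'S_n) (X : {perm pt r n})
  (hX : forall x, (X x).1 = s x.1) (x : pt r n) :
  orbit 'P <<[set piperm r n; X]>>%g x = [set y | y.1 \in porbit s x.1].
Proof.
apply/eqP; rewrite eqEsubset; apply/andP; split.
  rewrite acts_sub_orbit ?inE ?porbit_id //.
  rewrite gen_subG subUset !sub1set; apply/andP; split; apply/astabsP => y;
    rewrite !inE /= apermE ?piE ?hX //.
  by rewrite porbit_sym -{2}(expg1 s) porbit_perm porbit_sym.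
set G := <<_>>%g.
have key z m : (z.1, m) \in orbit 'P G z.
  have [i hi] := reach_all z.2 m; apply/orbitP.
  exists (piperm r n ^+ i)%g; last by rewrite /= apermE piX hi.
  by rewrite groupX // mem_gen // !inE eqxx.
have claim i m : ((s ^+ i)%g x.1, m) \in orbit 'P G x.
  elim: i m => [|i IH] m; first by rewrite expg0 perm1 key.
  pose p := ((s ^+ i)%g x.1, x.2).
  have hp : X p \in orbit 'P G x.
    apply: orbit_trans (IH x.2); apply: (mem_orbit 'P).
    by rewrite mem_gen // !inE eqxx orbT.
  apply: orbit_trans hp.
  have -> : (s ^+ i.+1)%g x.1 = (X p).1 by rewrite hX expgSr permM.
  exact: key.
apply/subsetP => y; rewrite inE => /porbitP [i hi].
by case: y hi => y1 y2 /= ->; apply: claim.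
Qed.

Lemma card_orbit_conj (T : finType) (G : {set {perm T}}) g x :
  #|orbit 'P (G :^ g)%g (g x)| = #|orbit 'P G x|.
Proof.
rewrite -(card_preimset _ (@perm_inj _ g)); apply: eq_card => y.
by rewrite inE; exact: (orbit_conjsg 'P G g x y).
Qed.

Lemma card_blockset r n (P : {set 'I_n}) :
  #|[set y : pt r n | y.1 \in P]| = #|P| * (2 * r).
Proof.
have -> : [set y : pt r n | y.1 \in P] = setX P [set: 'I_(2 * r)].
  by apply/setP => y; rewrite !inE andbT.
by rewrite cardsX cardsT card_ord.
Qed.

Lemma count_ct (T : finType) (s : {perm T}) l :
  l * count_mem l [seq #|(C : {set T})| | C <- enum (porbits s)] = #|[set x | #|porbit s x| == l]|.
Proof.
rewrite count_map -sum1_count; rewrite big_enum_cond /= big_distrr /=.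
rewrite -sum1_card (partition_big (@porbit _ s) (fun C => (C \in porbits s) && (#|C| == l))) /=.
  apply: eq_bigr => C /andP [hC /eqP hl]; move: hC hl; rewrite /porbits => /imsetP [x _ ->] hl.
  rewrite muln1 -{1}hl -sum1_card; apply: eq_bigl => y.
  rewrite inE eq_porbit_mem andbC; case hy: (y \in porbit s x) => //=.
  by move: hy; rewrite -eq_porbit_mem => /eqP ->; rewrite hl eqxx.
move=> x; rewrite inE => hx; apply/andP; split => //.
by rewrite /porbits; apply/imsetP; exists x.
Qed.

Lemma ct0 (T : finType) (s : {perm T}) : 0 \notin [seq #|(C : {set T})| | C <- enum (porbits s)].
Proof.
apply/mapP => [[C]]; rewrite mem_enum => /imsetP [x _ ->] h.
by have := card_porbit_neq0 s x; rewrite -h.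
Qed.

Lemma blockfst r n (B : {perm pt r n}) x : B \in Bgroup r n -> (B x).1 = Phi B x.1.
Proof. by move=> hB; rewrite {1}(PhiE hB) blockpermE. Qed.

Theorem lemma2p17 (r n : nat) (hr : 2 <= r) (hn : 2 <= n)
  (t g B B' : {perm pt r n}) (d e : 'I_n -> nat)
  (hd : forall j, d j < 2 * r) (he : forall j, e j < 2 * r)
  (htC : t \in (piperm r n ^: [set: {perm pt r n}])%g)
  (htcomm : (t * piperm r n = piperm r n * t)%g)
  (hg : (piperm r n ^ g)%g = t)
  (hB : B \in Bgroup r n) (hB' : B' \in Bgroup r n)
  (htdec : t = (B * Aprod r d)%g)
  (hgdec : (piperm r n ^ g^-1)%g = (B' * Aprod r e)%g) :
  cycle_type (Phi B) = cycle_type (Phi B').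
Proof.
set sig := (piperm r n ^ g^-1)%g.
have hXt x : (t x).1 = Phi B x.1 by rewrite htdec permM Aprod_fst blockfst.
have hXs x : (sig x).1 = Phi B' x.1 by rewrite /sig hgdec permM Aprod_fst blockfst.
have hG : <<[set piperm r n; t]>>%g = (<<[set piperm r n; sig]>> :^ g)%g.
  by rewrite -genJ conjUg !conjg_set1 hg /sig -conjgM mulVg conjg1 setUC.
have h2r : 0 < 2 * r by rewrite muln_gt0 /=; apply: leq_trans hr.
have hpt y : #|porbit (Phi B) (g y).1| = #|porbit (Phi B') y.1|.
  have := card_orbit_conj <<[set piperm r n; sig]>>%g g y.
  rewrite -hG (orbit_block hXt) (orbit_block hXs) !card_blockset => /eqP.
  by rewrite eqn_pmul2r // => /eqP.
have hcnt l : #|[set k | #|porbit (Phi B) k| == l]| = #|[set k | #|porbit (Phi B') k| == l]|.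
  apply/eqP; rewrite -(eqn_pmul2r h2r) -(card_blockset r) -(card_blockset r).
  have -> : [set y : pt r n | y.1 \in [set k | #|porbit (Phi B') k| == l]] =
      g @^-1: [set y : pt r n | y.1 \in [set k | #|porbit (Phi B) k| == l]].
    by apply/setP => y; rewrite !inE hpt.
  by rewrite card_preimset //; exact: perm_inj.
rewrite /cycle_type; apply/perm_sortP; [exact: leq_total|exact: leq_trans|exact: anti_leq|].
apply/allP => l _; apply/eqP.
case: l => [|l]; first by rewrite !(count_memPn (ct0 _)).
by apply/eqP; rewrite -(eqn_pmul2l (ltn0Sn l)) !count_ct hcnt.
Qed.
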